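(* Let $t_1>t_0>0$ and suppose there are continuous $f,g\colon[0,1]\to(0,\infty)$ and $\alpha,\beta>0$ with $\inf_{x\in[0,1]}\frac{\mathcal M_{t_0}g(x)}{g(x)}\ge e^{\beta}$ and $\sup_{x\in[0,1]}\frac{\mathcal M_{t_1}f(x)}{f(x)}\le e^{-\alpha}$. Then $t_0<\dim_H(\mathcal E)<t_1$.
   Context: Let $T_i(x)=\sqrt{i+x}-1$, $i=1,3$, maps $[0,1]\to[0,1]$. For $t\in\mathbb R$ let $\mathcal M_tf(x)=|T_1'(x)|^tf(T_1x)+|T_3'(x)|^tf(T_3x)$ on $C([0,1])$. $\mathcal E=\{-1+\sqrt{a_1+\sqrt{a_2+\cdots}}: a_k\in\{1,3\}\}$, where the infinite radical denotes $\lim_n T_{a_1}\circ\cdots\circ T_{a_n}(0)$; $\dim_H$ is Hausdorff dimension. *)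

(* Defs.v *)
From Stdlib Require Import Reals Lra.
From Coquelicot Require Import Coquelicot.
Open Scope R_scope.

Definition T (a x : R) : R := sqrt (a + x) - 1.

Definition Mop (t : R) (f : R -> R) (x : R) : R :=
  Rpower (Rabs (Derive (T 1) x)) t * f (T 1 x)
  + Rpower (Rabs (Derive (T 3) x)) t * f (T 3 x).

(* comp a n x = T_{a 0} o T_{a 1} o ... o T_{a (n-1)} (x) *)
Fixpoint comp (a : nat -> R) (n : nat) (x : R) : R :=
  match n with
  | O => x
  | S m => comp a m (T (a m) x)
  end.

(* The set E of infinite nested radicals with digits in {1,3} *)
Definition E_set : R -> Prop := fun y =>
  exists a : nat -> R, (forall k, a k = 1 \/ a k = 3) /\
    is_lim_seq (fun n => comp a n 0) y.

(* Diameter of a subset of R (in Rbar; -oo for the empty set). *)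
Definition diam (U : R -> Prop) : Rbar :=
  Lub_Rbar (fun r => exists x y, U x /\ U y /\ r = Rabs (x - y)).

(* diam(U)^s for s > 0, with the convention 0^s = 0 (and empty set contributes 0). *)
Definition diam_pow (s : R) (U : R -> Prop) : R :=
  match diam U with
  | Finite d => if Rlt_dec 0 d then Rpower d s else 0
  | _ => 0
  end.

(* H^s(E) = 0 : for every delta > 0, the delta-approximate Hausdorff outer
   measure H^s_delta(E) (inf over countable delta-covers of sum diam^s) is 0. *)
Definition hausdorff_null (s : R) (E : R -> Prop) : Prop :=
  forall delta eps : R, 0 < delta -> 0 < eps ->
    exists U : nat -> (R -> Prop),
      (forall y, E y -> exists n, U n y) /\
      (forall n, Rbar_le (diam (U n)) (Finite delta)) /\
      (forall N, sum_n (fun n => diam_pow s (U n)) N <= eps).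

Definition dimH (E : R -> Prop) : Rbar :=
  Glb_Rbar (fun s => 0 < s /\ hausdorff_null s E).

Definition cont_on01 (f : R -> R) : Prop :=
  forall x, 0 <= x <= 1 ->
    filterlim f (within (fun y => 0 <= y <= 1) (locally x)) (locally (f x)).

(* Main.v *)
Require Import Defs.
From Stdlib Require Import Reals Lra List Arith Lia Classical ClassicalEpsilon.
From Coquelicot Require Import Coquelicot.
Import ListNotations.
Open Scope R_scope.

Definition dig (b:bool) : R := if b then 3 else 1.
Definition Tw (w : list bool) (x:R) : R := fold_right (fun b y => T (dig b) y) x w.
Definition Tp (b:bool) (y:R) : R := / (2 * sqrt (dig b + y)).
Fixpoint dd (w : list bool) (x : R) : R :=
  match w with [] => 1 | b :: w' => Tp b (Tw w' x) * dd w' x end.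
Definition len w := Tw w 1 - Tw w 0.
Definition DD := exp 1.

Lemma dig_b b : 1 <= dig b <= 3.
Proof. destruct b; simpl; lra. Qed.

Lemma T_01 b x : 0 <= x <= 1 -> 0 <= T (dig b) x <= 1.
Proof.
  intros H. unfold T. pose proof (dig_b b).
  split.
  - assert (1 <= sqrt (dig b + x)). { rewrite <- sqrt_1. apply sqrt_le_1_alt. lra. } lra.
  - assert (sqrt (dig b + x) <= 2).
    { replace 2 with (sqrt 4). apply sqrt_le_1_alt. lra.
      replace 4 with (2*2) by lra. apply sqrt_square. lra. } lra.
Qed.

Lemma T_ge0 b x : 0 <= x -> 0 <= T (dig b) x.
Proof.
  intros H. unfold T. pose proof (dig_b b).
  assert (1 <= sqrt (dig b + x)). { rewrite <- sqrt_1. apply sqrt_le_1_alt. lra. } lra.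
Qed.

Lemma T_mono b x y : 0 <= x -> x <= y -> T (dig b) x <= T (dig b) y.
Proof. intros. unfold T. pose proof (dig_b b).
  assert (sqrt (dig b + x) <= sqrt (dig b + y)) by (apply sqrt_le_1_alt; lra). lra. Qed.

Lemma T_smono b x y : 0 <= x -> x < y -> T (dig b) x < T (dig b) y.
Proof. intros. unfold T. pose proof (dig_b b).
  assert (sqrt (dig b + x) < sqrt (dig b + y)) by (apply sqrt_lt_1_alt; lra). lra. Qed.

Lemma T_lip b x y : 0 <= x -> 0 <= y -> Rabs (T (dig b) x - T (dig b) y) <= Rabs (x - y) / 2.
Proof.
  intros. unfold T. pose proof (dig_b b).
  set (A := sqrt (dig b + x)). set (B := sqrt (dig b + y)).
  assert (HA : 1 <= A). { unfold A. rewrite <- sqrt_1. apply sqrt_le_1_alt. lra. }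
  assert (HB : 1 <= B). { unfold B. rewrite <- sqrt_1. apply sqrt_le_1_alt. lra. }
  assert (E : (A - B) * (A + B) = x - y).
  { replace ((A-B)*(A+B)) with (A*A - B*B) by ring. unfold A, B.
    rewrite !sqrt_sqrt by lra. ring. }
  replace (A - 1 - (B - 1)) with (A - B) by ring.
  rewrite <- E, Rabs_mult. rewrite (Rabs_right (A+B)) by lra.
  pose proof (Rabs_pos (A-B)). nra.
Qed.

Lemma Tw_app u v x : Tw (u ++ v) x = Tw u (Tw v x).
Proof. unfold Tw. apply fold_right_app. Qed.

Lemma Tw_01 w x : 0 <= x <= 1 -> 0 <= Tw w x <= 1.
Proof. induction w; simpl; intros; auto. apply T_01. auto. Qed.

Lemma Tw_ge0 w x : 0 <= x -> 0 <= Tw w x.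
Proof. induction w; simpl; intros; auto. apply T_ge0. auto. Qed.

Lemma Tw_mono w x y : 0 <= x -> x <= y -> Tw w x <= Tw w y.
Proof. induction w; simpl; intros; auto. apply T_mono; auto. apply Tw_ge0; auto. Qed.

Lemma Tw_smono w x y : 0 <= x -> x < y -> Tw w x < Tw w y.
Proof. induction w; simpl; intros; auto. apply T_smono; auto. apply Tw_ge0; auto. Qed.

Lemma Tp_pos b y : 0 <= y -> 0 < Tp b y.
Proof. intros. unfold Tp. pose proof (dig_b b). apply Rinv_0_lt_compat.
  assert (0 < sqrt (dig b + y)) by (apply sqrt_lt_R0; lra). lra. Qed.

Lemma Tp_bounds b y : 0 <= y <= 1 -> / 4 <= Tp b y <= / 2.
Proof.
  intros. unfold Tp. pose proof (dig_b b).
  assert (1 <= sqrt (dig b + y)). { rewrite <- sqrt_1. apply sqrt_le_1_alt. lra. }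
  assert (sqrt (dig b + y) <= 2).
    { replace 2 with (sqrt 4). apply sqrt_le_1_alt. lra.
      replace 4 with (2*2) by lra. apply sqrt_square. lra. }
  split; apply Rinv_le_contravar; lra.
Qed.

Lemma Tp_dist b x y : 0 <= x <= 1 -> 0 <= y <= 1 ->
  Tp b x <= exp (Rabs (x - y) / 2) * Tp b y.
Proof.
  intros. unfold Tp. pose proof (dig_b b).
  set (z := Rabs (x-y)). set (E := exp (z/2)).
  assert (Ez : E * E = exp z). { unfold E. rewrite <- exp_plus. f_equal. lra. }
  assert (E1 : 1 + z <= exp z).
  { destruct (Req_dec z 0) as [->|Hz]. rewrite exp_0. lra.
    left. apply exp_ineq1. unfold z in *. pose proof (Rabs_pos (x-y)). lra. }
  assert (HE : 0 < E) by apply exp_pos.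
  assert (Hx : 0 < sqrt (dig b + x)) by (apply sqrt_lt_R0; lra).
  assert (Hy : 0 < sqrt (dig b + y)) by (apply sqrt_lt_R0; lra).
  assert (Key : sqrt (dig b + y) <= E * sqrt (dig b + x)).
  { rewrite <- (sqrt_square E) by lra. rewrite <- sqrt_mult by nra.
    apply sqrt_le_1_alt. rewrite Ez.
    assert (y - x <= z) by (unfold z; rewrite Rabs_minus_sym; apply Rle_abs).
    assert (0 <= z) by apply Rabs_pos. nra. }
  rewrite <- (Rinv_inv E). rewrite <- Rinv_mult.
  apply Rinv_le_contravar. apply Rmult_lt_0_compat. apply Rinv_0_lt_compat; auto. lra.
  assert (/ E * (2 * sqrt (dig b + y)) <= 2 * sqrt (dig b + x)).
  { apply (Rmult_le_reg_l E); auto. rewrite <- Rmult_assoc, Rinv_r by lra. lra. }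
  lra.
Qed.

Lemma dd_app u v x : dd (u ++ v) x = dd u (Tw v x) * dd v x.
Proof.
  induction u; simpl. ring. rewrite IHu, Tw_app. ring.
Qed.

Lemma dd_pos w x : 0 <= x -> 0 < dd w x.
Proof. induction w; simpl; intros. lra. apply Rmult_lt_0_compat; auto.
  apply Tp_pos. apply Tw_ge0; auto. Qed.

Lemma dd_le w x : 0 <= x <= 1 -> dd w x <= (/2) ^ (length w).
Proof. induction w; simpl; intros. lra.
  pose proof (Tp_bounds a (Tw w x) (Tw_01 w x H)). pose proof (dd_pos w x ltac:(lra)).
  specialize (IHw H). nra. Qed.

Lemma exp_ge1 z : 0 <= z -> 1 <= exp z.
Proof. intros [h|h]. left. rewrite <- exp_0. apply exp_increasing; auto. subst. rewrite exp_0; lra. Qed.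

Lemma exp_mono a c : a <= c -> exp a <= exp c.
Proof. intros [h|h]. left; apply exp_increasing; auto. subst; lra. Qed.

Lemma dd_dist w x y : 0 <= x <= 1 -> 0 <= y <= 1 -> dd w x <= exp (Rabs (x - y)) * dd w y.
Proof.
  revert x y. induction w as [|b w IHw] using rev_ind; intros x y Hx Hy.
  - simpl. pose proof (exp_ge1 _ (Rabs_pos (x-y))). lra.
  - rewrite !dd_app. simpl.
    pose proof (IHw (T (dig b) x) (T (dig b) y) (T_01 _ _ Hx) (T_01 _ _ Hy)) as H1.
    pose proof (T_lip b x y ltac:(lra) ltac:(lra)) as H2.
    pose proof (Tp_dist b x y Hx Hy) as H3.
    assert (H4 : exp (Rabs (T (dig b) x - T (dig b) y)) <= exp (Rabs (x - y) / 2)) by (apply exp_mono; auto).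
    pose proof (dd_pos w (T (dig b) x) ltac:(apply T_ge0; lra)).
    pose proof (dd_pos w (T (dig b) y) ltac:(apply T_ge0; lra)).
    pose proof (Tp_pos b x ltac:(lra)). pose proof (Tp_pos b y ltac:(lra)).
    pose proof (exp_pos (Rabs (T (dig b) x - T (dig b) y))).
    replace (exp (Rabs (x - y))) with (exp (Rabs (x - y) / 2) * exp (Rabs (x - y) / 2))
      by (rewrite <- exp_plus; f_equal; lra).
    pose proof (exp_pos (Rabs (x - y) / 2)).
    unfold Tw in *. simpl. rewrite !Rmult_1_r.
    set (A := dd w (T (dig b) x)) in *. set (B := dd w (T (dig b) y)) in *.
    set (e1 := exp (Rabs (T (dig b) x - T (dig b) y))) in *. set (E := exp (Rabs (x - y) / 2)) in *.
    assert (A * Tp b x <= e1 * B * Tp b x) by (apply Rmult_le_compat_r; lra).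
    assert (e1 * B * Tp b x <= E * B * Tp b x) by (apply Rmult_le_compat_r; [lra|]; apply Rmult_le_compat_r; lra).
    assert (E * B * Tp b x <= E * B * (E * Tp b y)) by (apply Rmult_le_compat_l; nra).
    nra.
Qed.

Lemma T_derive a y : 0 < a + y -> is_derive (T a) y (/ (2 * sqrt (a + y))).
Proof. intros. unfold T. auto_derive. lra. field.
  assert (0 < sqrt (a+y)) by (apply sqrt_lt_R0; lra). lra. Qed.

Lemma Tw_gt w x : -1 < x -> -1 < Tw w x.
Proof. induction w; simpl; intros; auto. unfold T. pose proof (dig_b a).
  specialize (IHw H). assert (0 < sqrt (dig a + Tw w x)) by (apply sqrt_lt_R0; unfold Tw in *; lra).
  unfold Tw in *; lra. Qed.

Lemma Tw_derive w x : -1 < x -> is_derive (Tw w) x (dd w x).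
Proof. induction w; intros.
  - simpl. apply (is_derive_ext (fun x => x)). intros; reflexivity. apply (is_derive_id (K:=R_AbsRing)).
  - change (is_derive (fun x => T (dig a) (Tw w x)) x (Tp a (Tw w x) * dd w x)).
    pose proof (dig_b a). pose proof (Tw_gt w x H).
    assert (HT := T_derive (dig a) (Tw w x) ltac:(lra)).
    assert (H2 := is_derive_comp _ _ x _ _ HT (IHw H)).
    unfold scal in H2; simpl in H2; unfold mult in H2; simpl in H2.
    rewrite Rmult_comm. exact H2.
Qed.

Lemma len_mvt w : exists c, 0 <= c <= 1 /\ len w = dd w c.
Proof.
  destruct (MVT_gen (Tw w) 0 1 (dd w)) as [c [Hc Hm]].
  - intros. apply Tw_derive. rewrite Rmin_left in H by lra. lra.
  - intros. apply continuity_pt_filterlim. apply (ex_derive_continuous (Tw w)).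
    eexists. apply Tw_derive. rewrite Rmin_left in H by lra. lra.
  - rewrite Rmin_left, Rmax_right in Hc by lra. exists c. split; auto. unfold len. rewrite Hm. ring.
Qed.

Lemma DD_pos : 0 < DD.
Proof. apply exp_pos. Qed.

Lemma dd_D w x y : 0 <= x <= 1 -> 0 <= y <= 1 -> dd w x <= DD * dd w y.
Proof. intros. eapply Rle_trans. apply dd_dist; eauto. apply Rmult_le_compat_r.
  left; apply dd_pos; lra. apply exp_mono. apply Rabs_le. lra. Qed.

Lemma len_le w : len w <= DD * dd w 0.
Proof. destruct (len_mvt w) as [c [Hc ->]]. apply dd_D; lra. Qed.

Lemma len_ge w : dd w 0 <= DD * len w.
Proof. destruct (len_mvt w) as [c [Hc ->]]. apply dd_D; lra. Qed.

Lemma len_pos w : 0 < len w.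
Proof. unfold len. pose proof (Tw_smono w 0 1). lra. Qed.

Lemma len_child u b : len u <= 4 * DD * len (u ++ [b]).
Proof.
  destruct (len_mvt (u ++ [b])) as [c [Hc ->]].
  destruct (len_mvt u) as [c' [Hc' ->]].
  rewrite dd_app. simpl. rewrite Rmult_1_r.
  pose proof (Tp_bounds b c Hc).
  pose proof (dd_D u c' (T (dig b) c) Hc' (T_01 _ _ Hc)).
  pose proof (dd_pos u (T (dig b) c) ltac:(apply T_ge0; lra)).
  pose proof DD_pos. unfold Tw in *; simpl in *.
  assert (DD * dd u (T (dig b) c) * 1 <= DD * dd u (T (dig b) c) * (4 * Tp b c)).
  { apply Rmult_le_compat_l. nra. lra. } nra.
Qed.

Lemma len_pref u v : len (u ++ v) <= len u.
Proof. unfold len. rewrite !Tw_app.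
  pose proof (Tw_01 v 0 ltac:(lra)). pose proof (Tw_01 v 1 ltac:(lra)).
  pose proof (Tw_mono v 0 1 ltac:(lra) ltac:(lra)).
  pose proof (Tw_mono u 0 (Tw v 0) ltac:(lra) ltac:(lra)).
  pose proof (Tw_mono u (Tw v 1) 1 ltac:(lra) ltac:(lra)). lra. Qed.

Lemma len_nil : len [] = 1.
Proof. unfold len; simpl. lra. Qed.

Lemma Derive_T a x : 0 < a + x -> Derive (T a) x = / (2 * sqrt (a + x)).
Proof. intros. apply is_derive_unique. apply T_derive; auto. Qed.

Lemma Mop_eq t h x : 0 <= x <= 1 ->
  Mop t h x = Rpower (Tp false x) t * h (T (dig false) x) + Rpower (Tp true x) t * h (T (dig true) x).
Proof.
  intros. unfold Mop, Tp, dig. rewrite !Derive_T by lra.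
  rewrite !Rabs_right. auto.
  all: left; apply Rinv_0_lt_compat; assert (0 < sqrt (3 + x)) by (apply sqrt_lt_R0; lra);
    assert (0 < sqrt (1 + x)) by (apply sqrt_lt_R0; lra); lra.
Qed.

Definition lsum {A} (F : A -> R) (l : list A) : R := fold_right (fun x acc => F x + acc) 0 l.

Fixpoint words (n:nat) : list (list bool) :=
  match n with
  | O => [[]]
  | S n => map (cons false) (words n) ++ map (cons true) (words n)
  end.

Lemma lsum_app {A} (F : A -> R) l1 l2 : lsum F (l1 ++ l2) = lsum F l1 + lsum F l2.
Proof. induction l1; simpl. ring. rewrite IHl1. ring. Qed.

Lemma lsum_map {A B} (F : B -> R) (g : A -> B) l : lsum F (map g l) = lsum (fun x => F (g x)) l.
Proof. induction l; simpl; auto. rewrite IHl; auto. Qed.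

Lemma lsum_le {A} (F G : A -> R) l : (forall x, In x l -> F x <= G x) -> lsum F l <= lsum G l.
Proof. induction l; simpl; intros. lra. apply Rplus_le_compat; auto. Qed.

Lemma lsum_nonneg {A} (F : A -> R) l : (forall x, In x l -> 0 <= F x) -> 0 <= lsum F l.
Proof. induction l; simpl; intros. lra. pose proof (H a (or_introl eq_refl)).
  assert (0 <= lsum F l) by auto. lra. Qed.

Lemma lsum_scal {A} (F : A -> R) c l : lsum (fun x => c * F x) l = c * lsum F l.
Proof. induction l; simpl. ring. rewrite IHl. ring. Qed.

Lemma lsum_plus {A} (F G : A -> R) l : lsum (fun x => F x + G x) l = lsum F l + lsum G l.
Proof. induction l; simpl. ring. rewrite IHl. ring. Qed.

Lemma lsum_ext {A} (F G : A -> R) l : (forall x, In x l -> F x = G x) -> lsum F l = lsum G l.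
Proof. induction l; simpl; intros; auto. rewrite H, IHl; auto. Qed.

Lemma lsum_zero {A} (l : list A) : lsum (fun _ => 0) l = 0.
Proof. induction l; simpl; auto. rewrite IHl; ring. Qed.

Lemma lsum_swap {A B} (F : A -> B -> R) l1 l2 :
  lsum (fun x => lsum (fun y => F x y) l2) l1 = lsum (fun y => lsum (fun x => F x y) l1) l2.
Proof. induction l1; simpl. rewrite lsum_zero; auto. rewrite IHl1, <- lsum_plus. auto. Qed.

Lemma lsum_const {A} c (l : list A) : lsum (fun _ => c) l = INR (length l) * c.
Proof. induction l as [|a l IHl]. simpl; ring.
  change (lsum (fun _ => c) (a::l)) with (c + lsum (fun _ => c) l). rewrite IHl.
  change (length (a::l)) with (S (length l)). rewrite S_INR; ring. Qed.

Lemma words_length n w : In w (words n) -> length w = n.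
Proof. revert w; induction n; simpl; intros.
  - destruct H as [<-|[]]; auto.
  - apply in_app_or in H. destruct H as [H|H]; apply in_map_iff in H as [v [<- Hv]]; simpl; auto.
Qed.

Lemma in_words w : In w (words (length w)).
Proof. induction w; simpl; auto. apply in_or_app. destruct a; [right|left]; apply in_map; auto. Qed.

Lemma words_S F n : lsum F (words (S n)) = lsum (fun w => F (false :: w) + F (true :: w)) (words n).
Proof. simpl. rewrite lsum_app, !lsum_map, lsum_plus. auto. Qed.

Lemma words_split F k m :
  lsum F (words (k + m)) = lsum (fun u => lsum (fun v => F (u ++ v)) (words m)) (words k).
Proof.
  revert F; induction k; intros F; simpl plus.
  - change (lsum F (words m) = lsum (fun v => F ([] ++ v)) (words m) + 0). rewrite Rplus_0_r. reflexivity.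
  - change (S k + m)%nat with (S (k + m)). rewrite words_S, words_S, lsum_plus, !IHk, <- lsum_plus. simpl. apply lsum_ext. intros.
    rewrite <- lsum_plus. auto.
Qed.

Lemma words_nodup n : NoDup (words n).
Proof. induction n; simpl. constructor; auto. constructor.
  apply NoDup_app.
  - apply NoDup_map_NoDup_ForallPairs; auto. intros x y _ _ H; injection H; auto.
  - apply NoDup_map_NoDup_ForallPairs; auto. intros x y _ _ H; injection H; auto.
  - intros a H1 H2. apply in_map_iff in H1 as [v [<- _]]. apply in_map_iff in H2 as [v' [H _]]. discriminate.
Qed.

Fixpoint AllW (n:nat) : list (list bool) :=
  match n with O => words O | S n => AllW n ++ words (S n) end.

Lemma AllW_len n w : In w (AllW n) -> (length w <= n)%nat.
Proof. induction n; simpl; intros. destruct H as [<-|[]]; simpl; lia.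
  apply in_app_or in H as [H|H]. specialize (IHn H); lia.
  apply (words_length (S n)) in H. lia. Qed.

Lemma in_AllW n w : (length w <= n)%nat -> In w (AllW n).
Proof. induction n; intros.
  - destruct w; simpl in *; auto; lia.
  - change (In w (AllW n ++ words (S n))). apply in_or_app. destruct (Nat.eq_dec (length w) (S n)).
    right. rewrite <- e. apply in_words. left; apply IHn; lia. Qed.

Lemma AllW_nodup n : NoDup (AllW n).
Proof. induction n. apply (words_nodup 0).
  change (NoDup (AllW n ++ words (S n))). apply NoDup_app; auto. apply (words_nodup (S n)).
  intros a H1 H2. apply AllW_len in H1. apply (words_length (S n)) in H2. lia. Qed.

Fixpoint prefb (u w : list bool) : bool :=
  match u, w with
  | [], _ => true
  | a :: u', b :: w' => Bool.eqb a b && prefb u' w'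
  | _ :: _, [] => false
  end.

Lemma prefb_app u v : prefb u (u ++ v) = true.
Proof. induction u; simpl; auto. rewrite Bool.eqb_reflx; auto. Qed.

Lemma prefb_spec u w : prefb u w = true -> exists v, w = u ++ v.
Proof. revert w; induction u; simpl; intros. eauto. destruct w. discriminate.
  apply andb_prop in H as [H1 H2]. apply Bool.eqb_prop in H1. subst.
  destruct (IHu w H2) as [v ->]. eauto. Qed.

Lemma sum_pref F u N : (length u <= N)%nat ->
  lsum (fun w => if prefb u w then F w else 0) (words N) = lsum (fun v => F (u ++ v)) (words (N - length u)).
Proof.
  revert F N; induction u as [|a u IHu]; intros F N HN.
  - simpl. rewrite Nat.sub_0_r. auto.
  - destruct N as [|N]. simpl in HN; lia. simpl in HN.
    rewrite words_S. simpl length. simpl Nat.sub.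
    transitivity (lsum (fun w => if prefb u w then F (a :: w) else 0) (words N)).
    2: { rewrite IHu by lia. reflexivity. }
    apply lsum_ext. intros w _. simpl. destruct a; simpl; ring.
Qed.

Lemma cut_ineq F (C : list (list bool)) N :
  (forall w, In w (words N) -> 0 <= F w) ->
  (forall u, In u C -> (length u <= N)%nat) ->
  (forall w, In w (words N) -> exists u, In u C /\ prefb u w = true) ->
  lsum F (words N) <= lsum (fun u => lsum (fun v => F (u ++ v)) (words (N - length u))) C.
Proof.
  intros HF HC Hw.
  apply Rle_trans with (lsum (fun w => lsum (fun u => if prefb u w then F w else 0) C) (words N)).
  - apply lsum_le. intros w Hin. destruct (Hw w Hin) as [u [HuC Hp]].
    clear Hw HC. induction C. destruct HuC.
    simpl. destruct HuC as [<-|HuC].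
    + rewrite Hp. assert (0 <= lsum (fun u0 => if prefb u0 w then F w else 0) C).
      { apply lsum_nonneg. intros. destruct (prefb x w); auto. lra. } lra.
    + assert (0 <= (if prefb a w then F w else 0)) by (destruct (prefb a w); auto; lra).
      specialize (IHC HuC). lra.
  - rewrite lsum_swap. apply lsum_le. intros u Hu. rewrite sum_pref; auto. lra.
Qed.

Lemma Rpower_pos x y : 0 < Rpower x y.
Proof. apply exp_pos. Qed.

Lemma Rpower_one y : Rpower 1 y = 1.
Proof. unfold Rpower. rewrite ln_1, Rmult_0_r, exp_0. auto. Qed.

Definition Msum s h y := Rpower (Tp false y) s * h (T (dig false) y) + Rpower (Tp true y) s * h (T (dig true) y).

Lemma step_eq s h w x : 0 <= x ->
  Rpower (dd (false :: w) x) s * h (Tw (false :: w) x) + Rpower (dd (true :: w) x) s * h (Tw (true :: w) x)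
  = Rpower (dd w x) s * Msum s h (Tw w x).
Proof.
  intros. simpl. unfold Msum.
  rewrite <- !(Rpower_mult_distr (Tp _ _)); try apply Tp_pos; try apply dd_pos; try apply Tw_ge0; auto.
  unfold Tw, dig. ring.
Qed.

Lemma iter_super s h : (forall y, 0 <= y <= 1 -> h y <= Msum s h y) ->
  forall n x, 0 <= x <= 1 -> h x <= lsum (fun w => Rpower (dd w x) s * h (Tw w x)) (words n).
Proof.
  intros Hh n. induction n; intros x Hx.
  - simpl. rewrite Rpower_one. lra.
  - rewrite words_S. eapply Rle_trans. apply (IHn x Hx). apply lsum_le. intros w _.
    rewrite step_eq by lra. apply Rmult_le_compat_l. left; apply Rpower_pos.
    apply Hh. apply Tw_01; auto.
Qed.

Lemma iter_sub s h k : 0 <= k -> (forall y, 0 <= y <= 1 -> Msum s h y <= k * h y) ->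
  forall n x, 0 <= x <= 1 -> lsum (fun w => Rpower (dd w x) s * h (Tw w x)) (words n) <= k ^ n * h x.
Proof.
  intros Hk Hh n. induction n; intros x Hx.
  - simpl. rewrite Rpower_one. lra.
  - rewrite words_S. eapply Rle_trans.
    apply lsum_le with (G := fun w => k * (Rpower (dd w x) s * h (Tw w x))).
    intros w _. rewrite step_eq by lra.
    pose proof (Hh (Tw w x) (Tw_01 w x Hx)). pose proof (Rpower_pos (dd w x) s). nra.
    rewrite lsum_scal. change (k ^ S n) with (k * k ^ n). rewrite Rmult_assoc. apply Rmult_le_compat_l; auto.
Qed.

Definition P s n := lsum (fun w => Rpower (dd w 0) s) (words n).

Lemma lsum_pos {A} (F : A -> R) l a : In a l -> (forall x, 0 < F x) -> 0 < lsum F l.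
Proof. induction l; simpl; intros. destruct H. destruct H as [->|H].
  pose proof (lsum_nonneg F l (fun x _ => Rlt_le _ _ (H0 x))). pose proof (H0 a). lra.
  pose proof (IHl H H0). pose proof (H0 a0). lra. Qed.

Lemma P_pos s n : 0 < P s n.
Proof. unfold P. apply (lsum_pos _ _ (repeat false n)).
  pose proof (in_words (repeat false n)). rewrite repeat_length in H. auto.
  intros; apply Rpower_pos. Qed.

Lemma P_lower s h G : (forall y, 0 <= y <= 1 -> h y <= Msum s h y) ->
  (forall y, 0 <= y <= 1 -> 0 < h y <= G) -> forall n, h 0 / G <= P s n.
Proof.
  intros Hs Hb n. pose proof (iter_super s h Hs n 0 ltac:(lra)).
  assert (HG : 0 < G) by (destruct (Hb 0); lra).
  apply (Rmult_le_reg_r G); auto. unfold Rdiv. rewrite Rmult_assoc, Rinv_l, Rmult_1_r by lra.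
  eapply Rle_trans. apply H. unfold P. rewrite Rmult_comm, <- lsum_scal. apply lsum_le.
  intros w _. pose proof (Hb (Tw w 0) (Tw_01 w 0 ltac:(lra))). pose proof (Rpower_pos (dd w 0) s). nra.
Qed.

Lemma P_upper s h k : 0 <= k -> (forall y, 0 <= y <= 1 -> Msum s h y <= k * h y) ->
  forall m, (forall y, 0 <= y <= 1 -> m <= h y) -> 0 < m -> forall n, P s n <= k ^ n * h 0 / m.
Proof.
  intros Hk Hs m Hm Hm0 n. pose proof (iter_sub s h k Hk Hs n 0 ltac:(lra)).
  unfold Rdiv. apply (Rmult_le_reg_r m); auto. rewrite Rmult_assoc, Rinv_l, Rmult_1_r by lra.
  eapply Rle_trans. 2: apply H. unfold P. rewrite Rmult_comm, <- lsum_scal. apply lsum_le.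
  intros w _. pose proof (Hm (Tw w 0) (Tw_01 w 0 ltac:(lra))). pose proof (Rpower_pos (dd w 0) s). nra.
Qed.

Lemma dd_app_bounds u v : dd u 0 * dd v 0 <= DD * dd (u ++ v) 0 /\ dd (u ++ v) 0 <= DD * (dd u 0 * dd v 0).
Proof.
  rewrite dd_app. pose proof (Tw_01 v 0 ltac:(lra)).
  pose proof (dd_D u 0 (Tw v 0) ltac:(lra) H). pose proof (dd_D u (Tw v 0) 0 H ltac:(lra)).
  pose proof (dd_pos v 0 ltac:(lra)). split; nra.
Qed.

Lemma Rpower_le_base a b c : 0 <= c -> 0 < a -> a <= b -> Rpower a c <= Rpower b c.
Proof. intros. apply Rle_Rpower_l; auto. Qed.

Lemma lsum_prod {A} (F G : A -> R) l1 l2 :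
  lsum F l1 * lsum G l2 = lsum (fun u => lsum (fun v => F u * G v) l2) l1.
Proof. rewrite Rmult_comm, <- lsum_scal. apply lsum_ext. intros. rewrite Rmult_comm, <- lsum_scal. auto. Qed.

Lemma P_supermult s k m : 0 <= s -> P s k * P s m <= Rpower DD s * P s (k + m).
Proof.
  intros Hs. unfold P. rewrite words_split, lsum_prod, <- lsum_scal.
  apply lsum_le. intros u _. rewrite <- lsum_scal. apply lsum_le. intros v _.
  destruct (dd_app_bounds u v) as [H1 _].
  rewrite Rpower_mult_distr by (apply dd_pos; lra).
  rewrite Rpower_mult_distr by (try apply DD_pos; apply dd_pos; lra).
  apply Rpower_le_base; auto. pose proof (dd_pos u 0 ltac:(lra)). pose proof (dd_pos v 0 ltac:(lra)). nra.
Qed.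

Lemma P_submult s u m : 0 <= s ->
  lsum (fun v => Rpower (dd (u ++ v) 0) s) (words m) <= Rpower DD s * Rpower (dd u 0) s * P s m.
Proof.
  intros Hs. unfold P. rewrite <- lsum_scal. apply lsum_le. intros v _.
  destruct (dd_app_bounds u v) as [_ H2].
  rewrite !Rpower_mult_distr by (try apply DD_pos; try apply Rmult_lt_0_compat; try apply DD_pos; apply dd_pos; lra).
  apply Rpower_le_base; auto. apply dd_pos; lra. lra.
Qed.

Lemma cut_bound s c0 (C : list (list bool)) N : 0 <= s -> 0 < c0 -> (forall n, c0 <= P s n) ->
  (forall u, In u C -> (length u <= N)%nat) ->
  (forall w, In w (words N) -> exists u, In u C /\ prefb u w = true) ->
  c0 <= Rpower DD s * Rpower DD s * lsum (fun u => Rpower (dd u 0) s) C.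
Proof.
  intros Hs Hc0 HP HC Hw.
  set (Ds := Rpower DD s). assert (HDs : 0 < Ds) by apply Rpower_pos.
  pose proof (cut_ineq (fun w => Rpower (dd w 0) s) C N ltac:(intros; left; apply Rpower_pos) HC Hw) as H.
  fold (P s N) in H.
  assert (H2 : lsum (fun u => lsum (fun v => Rpower (dd (u ++ v) 0) s) (words (N - length u))) C
     <= lsum (fun u => Ds * Rpower (dd u 0) s * (Ds * P s N / c0)) C).
  { apply lsum_le. intros u Hu. eapply Rle_trans. apply P_submult; auto.
    apply Rmult_le_compat_l. left; apply Rmult_lt_0_compat; auto; apply Rpower_pos.
    pose proof (P_supermult s (length u) (N - length u) Hs).
    replace (length u + (N - length u))%nat with N in H0 by (specialize (HC u Hu); lia).
    specialize (HP (length u)). pose proof (P_pos s (N - length u)).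
    apply (Rmult_le_reg_r c0); auto. unfold Rdiv. rewrite Rmult_assoc, Rinv_l, Rmult_1_r by lra.
    fold Ds in H0. nra. }
  assert (H3 : lsum (fun u => Ds * Rpower (dd u 0) s * (Ds * P s N / c0)) C =
     (Ds * Ds * lsum (fun u => Rpower (dd u 0) s) C) * (P s N / c0)).
  { replace ((Ds * Ds * lsum (fun u => Rpower (dd u 0) s) C) * (P s N / c0)) with
      ((Ds * Ds * (P s N / c0)) * lsum (fun u => Rpower (dd u 0) s) C) by ring.
    rewrite <- lsum_scal. apply lsum_ext. intros. unfold Rdiv. ring. }
  pose proof (P_pos s N).
  assert (P s N * 1 <= P s N * ((Ds * Ds * lsum (fun u => Rpower (dd u 0) s) C) / c0)).
  { unfold Rdiv in *. rewrite Rmult_1_r. replace (P s N * (Ds * Ds * lsum (fun u => Rpower (dd u 0) s) C * / c0))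
      with (Ds * Ds * lsum (fun u => Rpower (dd u 0) s) C * (P s N * / c0)) by ring. lra. }
  apply Rmult_le_reg_l in H1; auto.
  apply (Rmult_le_reg_r (/ c0)). apply Rinv_0_lt_compat; auto. rewrite Rinv_r by lra. exact H1.
Qed.

Lemma lsum_filter {A} (F : A -> R) (f : A -> bool) l :
  lsum F l = lsum F (filter f l) + lsum F (filter (fun x => negb (f x)) l).
Proof. induction l; simpl. ring. destruct (f a); simpl; rewrite IHl; ring. Qed.

Lemma disj_sum {A} (a b : A -> R) : forall n (l : list A) p q, (length l <= n)%nat ->
  NoDup l -> (forall x, In x l -> p <= a x /\ a x <= b x /\ b x <= q) ->
  (forall x y, In x l -> In y l -> x <> y -> b x < a y \/ b y < a x) ->
  p <= q -> lsum (fun x => b x - a x) l <= q - p.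
Proof.
  induction n; intros l p q Hn Hnd Hin Hd Hpq.
  - destruct l; simpl in *; try lia. lra.
  - destruct l as [|x l']. simpl; lra.
    simpl. inversion Hnd; subst.
    set (f := fun y => if Rlt_dec (b y) (a x) then true else false).
    rewrite (lsum_filter _ f l').
    pose proof (filter_length f l'). simpl in Hn.
    destruct (Hin x (or_introl eq_refl)) as [Hx1 [Hx2 Hx3]].
    assert (L : lsum (fun x0 => b x0 - a x0) (filter f l') <= a x - p).
    { apply IHn. lia. apply NoDup_filter; auto.
      intros y Hy. apply filter_In in Hy as [Hy Hf]. unfold f in Hf.
      destruct (Rlt_dec (b y) (a x)); try discriminate.
      destruct (Hin y (or_intror Hy)) as [? [? ?]]. lra.
      intros y1 y2 Hy1 Hy2 Hne. apply filter_In in Hy1 as [Hy1 _]. apply filter_In in Hy2 as [Hy2 _].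
      apply Hd; simpl; auto. lra. }
    assert (R : lsum (fun x0 => b x0 - a x0) (filter (fun y => negb (f y)) l') <= q - b x).
    { apply IHn. lia. apply NoDup_filter; auto.
      intros y Hy. apply filter_In in Hy as [Hy Hf]. unfold f in Hf.
      destruct (Rlt_dec (b y) (a x)); try discriminate.
      destruct (Hin y (or_intror Hy)) as [? [? ?]].
      assert (Hne : x <> y) by (intro; subst; contradiction).
      destruct (Hd x y (or_introl eq_refl) (or_intror Hy) Hne) as [h|h]; [lra | contradiction].
      intros y1 y2 Hy1 Hy2 Hne. apply filter_In in Hy1 as [Hy1 _]. apply filter_In in Hy2 as [Hy2 _].
      apply Hd; simpl; auto. lra. }
    lra.
Qed.

Lemma diverge (u v : list bool) : (forall x, v <> u ++ x) -> (forall x, u <> v ++ x) ->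
  exists p b u' v', u = p ++ b :: u' /\ v = p ++ negb b :: v'.
Proof.
  revert v. induction u as [|a u IH]; intros v H1 H2.
  - exfalso. apply (H1 v). auto.
  - destruct v as [|c v]. exfalso. apply (H2 (a :: u)). auto.
    destruct (Bool.bool_dec a c).
    + subst. destruct (IH v) as [p [b [u' [v' [-> ->]]]]].
      intros x Hx. apply (H1 x). simpl. rewrite Hx; auto.
      intros x Hx. apply (H2 x). simpl. rewrite Hx; auto.
      exists (c :: p), b, u', v'. auto.
    + exists [], a, u, v. split; auto. simpl. destruct a, c; auto; congruence.
Qed.

Lemma gap_lt p u' v' : Tw (p ++ false :: u') 1 < Tw (p ++ true :: v') 0.
Proof.
  rewrite !Tw_app. apply Rle_lt_trans with (Tw p (T 1 1)).
  - apply Tw_mono. apply (T_ge0 false). apply Tw_ge0; lra.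
    apply (T_mono false). apply Tw_ge0; lra. apply Tw_01; lra.
  - apply Rlt_le_trans with (Tw p (T 3 0)).
    + apply Tw_smono. apply (T_ge0 false); lra. unfold T.
      assert (sqrt (1+1) < sqrt (3 + 0)) by (apply sqrt_lt_1_alt; lra). lra.
    + apply Tw_mono. apply (T_ge0 true); lra. apply (T_mono true). lra. apply Tw_ge0; lra.
Qed.

Lemma diverge_disj u v : (forall x, v <> u ++ x) -> (forall x, u <> v ++ x) ->
  Tw u 1 < Tw v 0 \/ Tw v 1 < Tw u 0.
Proof.
  intros H1 H2. destruct (diverge u v H1 H2) as [p [b [u' [v' [-> ->]]]]].
  destruct b; simpl. right; apply gap_lt. left; apply gap_lt.
Qed.

Definition Qset (r : R) (U : R -> Prop) (u : list bool) : Prop :=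
  exists u' b, u = u' ++ [b] /\ len u <= r /\ r < len u' /\
    exists y, U y /\ Tw u 0 <= y <= Tw u 1.

Lemma Q_antichain r U u x : Qset r U u -> Qset r U (u ++ x) -> x = [].
Proof.
  intros [u1 [b1 [E1 [L1 [R1 _]]]]] [u2 [b2 [E2 [L2 [R2 _]]]]].
  destruct x as [|c x]; auto. exfalso.
  destruct (exists_last (l := c :: x)) as [x' [c' Ex]]. discriminate.
  rewrite Ex, app_assoc in E2. apply app_inj_tail in E2 as [E2 _].
  pose proof (len_pref u x'). rewrite <- E2 in R2. lra.
Qed.

Lemma Q_disj r U u v : Qset r U u -> Qset r U v -> u <> v -> Tw u 1 < Tw v 0 \/ Tw v 1 < Tw u 0.
Proof.
  intros Hu Hv Hne. apply diverge_disj.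
  - intros x ->. apply Hne. rewrite (Q_antichain r U u x Hu Hv). symmetry; apply app_nil_r.
  - intros x ->. apply Hne. rewrite (Q_antichain r U v x Hv Hu). apply app_nil_r.
Qed.

Definition qb (P : Prop) : bool := if excluded_middle_informative P then true else false.

Lemma qb_true P : qb P = true -> P.
Proof. unfold qb. destruct (excluded_middle_informative P); auto; discriminate. Qed.

Lemma qb_intro P : P -> qb P = true.
Proof. unfold qb. destruct (excluded_middle_informative P); auto; contradiction. Qed.

Lemma Q_count r U l z s : 0 < r -> 0 <= s -> NoDup l -> U z -> (forall y1 y2, U y1 -> U y2 -> Rabs (y1 - y2) <= r) ->
  lsum (fun u => Rpower (dd u 0) s) (filter (fun u => qb (Qset r U u)) l)
    <= 16 * DD * Rpower (DD * r) s.
Proof.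
  intros Hr Hs Hnd Hz Hd.
  set (L := filter (fun u => qb (Qset r U u)) l).
  assert (HL : forall u, In u L -> Qset r U u).
  { intros u Hu. apply filter_In in Hu as [_ Hu]. apply qb_true; auto. }
  assert (Hlen : forall u, In u L -> r / (4 * DD) <= len u /\ len u <= r).
  { intros u Hu. destruct (HL u Hu) as [u' [b [-> [L1 [R1 _]]]]]. split; auto.
    pose proof (len_child u' b). pose proof DD_pos. apply (Rmult_le_reg_l (4 * DD)). lra.
    field_simplify. lra. lra. }
  assert (Hsum : lsum (fun u => Tw u 1 - Tw u 0) L <= (z + 2 * r) - (z - 2 * r)).
  { apply (disj_sum (fun u => Tw u 0) (fun u => Tw u 1) (length L)); auto. apply NoDup_filter; auto.
    - intros u Hu. destruct (Hlen u Hu) as [_ Hl]. destruct (HL u Hu) as [u' [b [_ [_ [_ [y [Uy Hy]]]]]]].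
      pose proof (Hd y z Uy Hz). apply Rabs_le_between in H. unfold len in Hl. lra.
    - intros u v Hu Hv Hne. apply Q_disj with r U; auto.
    - lra. }
  assert (Hcnt : INR (length L) * (r / (4 * DD)) <= 4 * r).
  { rewrite <- lsum_const. eapply Rle_trans. 2: { replace (4 * r) with ((z + 2 * r) - (z - 2 * r)) by ring. apply Hsum. }
    apply lsum_le. intros u Hu. destruct (Hlen u Hu). unfold len in *. lra. }
  eapply Rle_trans. apply (lsum_le _ (fun _ => Rpower (DD * r) s)).
  { intros u Hu. apply Rpower_le_base; auto. apply dd_pos; lra.
    pose proof (len_ge u). destruct (Hlen u Hu). pose proof DD_pos. nra. }
  rewrite lsum_const. apply Rmult_le_compat_r. left; apply Rpower_pos.
  pose proof DD_pos. apply (Rmult_le_reg_r (r / (4 * DD))). apply Rdiv_lt_0_compat; lra.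
  replace (16 * DD * (r / (4 * DD))) with (4 * r) by (field; lra). auto.
Qed.

Section S6.
Implicit Types (p : nat -> bool) (n m N k K : nat).

Fixpoint wpre (p : nat -> bool) (n : nat) : list bool :=
  match n with O => [] | S n => wpre p n ++ [p n] end.

Lemma pre_length p n : length (wpre p n) = n.
Proof. induction n; simpl; auto. rewrite length_app, IHn. simpl. lia. Qed.

Lemma comp_pre p n (x : R) : Defs.comp (fun k => dig (p k)) n x = Tw (wpre p n) x.
Proof. revert x; induction n; intros x; simpl; auto. rewrite IHn, Tw_app. auto. Qed.

Lemma pre_app p n m : (n <= m)%nat -> exists x, wpre p m = wpre p n ++ x.
Proof. induction m; intros. assert (n = 0%nat) by lia. subst. exists []. auto.
  destruct (Nat.eq_dec n (S m)). subst. exists []. rewrite app_nil_r; auto.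
  destruct IHm as [x Hx]. lia. exists (x ++ [p m]). simpl. rewrite Hx, app_assoc. auto. Qed.

Lemma in_cyl p n m : (n <= m)%nat -> Tw (wpre p n) 0 <= Tw (wpre p m) 0 <= Tw (wpre p n) 1.
Proof. intros H. destruct (pre_app p n m H) as [x ->]. rewrite Tw_app.
  pose proof (Tw_01 x 0 ltac:(lra)). split; apply Tw_mono; lra. Qed.

Lemma len_small w : len w <= DD * (/2) ^ (length w).
Proof. eapply Rle_trans. apply len_le. apply Rmult_le_compat_l. left; apply DD_pos. apply dd_le. lra. Qed.

Lemma small_exists eps : 0 < eps -> exists N, forall n, (N <= n)%nat -> DD * (/2) ^ n < eps.
Proof.
  intros. destruct (pow_lt_1_zero (/2) ltac:(rewrite Rabs_right; lra) (eps / DD)) as [N HN].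
  apply Rdiv_lt_0_compat; auto; apply DD_pos.
  exists N. intros n Hn. specialize (HN n Hn). rewrite Rabs_right in HN.
  pose proof DD_pos. apply (Rmult_lt_compat_l DD) in HN; auto. field_simplify in HN; lra.
  left. apply pow_lt. lra.
Qed.

Lemma path_lim p : exists y : R, is_lim_seq (fun n => Tw (wpre p n) 0) y.
Proof.
  assert (ex_finite_lim_seq (fun n => Tw (wpre p n) 0)).
  { apply ex_lim_seq_cauchy_corr. intros eps. destruct (small_exists eps (cond_pos eps)) as [N HN].
    exists N. intros n m Hn Hm. pose proof (in_cyl p N n Hn). pose proof (in_cyl p N m Hm).
    pose proof (len_small (wpre p N)). rewrite pre_length in H1. specialize (HN N (le_n N)).
    unfold len in H1. apply Rabs_def1; lra. }
  destruct H as [y Hy]. exists y. auto.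
Qed.

Lemma lim_in_cyl p (y : R) : is_lim_seq (fun n => Tw (wpre p n) 0) y -> forall n, Tw (wpre p n) 0 <= y <= Tw (wpre p n) 1.
Proof.
  intros Hy n. split.
  - apply (is_lim_seq_le_loc (fun _ => Tw (wpre p n) 0) (fun m => Tw (wpre p m) 0) (Finite _) (Finite _)).
    exists n. intros m Hm. apply in_cyl; lia. apply is_lim_seq_const. auto.
  - apply (is_lim_seq_le_loc (fun m => Tw (wpre p m) 0) (fun _ => Tw (wpre p n) 1) (Finite _) (Finite _)).
    exists n. intros m Hm. apply in_cyl; lia. auto. apply is_lim_seq_const.
Qed.

Lemma E_of_path p : exists y : R, E_set y /\ forall n, Tw (wpre p n) 0 <= y <= Tw (wpre p n) 1.
Proof.
  destruct (path_lim p) as [y Hy]. exists y. split. 2: apply lim_in_cyl; auto.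
  exists (fun k => dig (p k)). split. intros k; destruct (p k); simpl; auto.
  eapply is_lim_seq_ext. 2: apply Hy. intros n. simpl. rewrite comp_pre. auto.
Qed.

Lemma path_of_E (y : R) : E_set y -> exists p, is_lim_seq (fun n => Tw (wpre p n) 0) y.
Proof.
  intros [a [Ha Hl]]. exists (fun k => qb (a k = 3)).
  assert (Hd : forall k, a k = dig (qb (a k = 3))).
  { intros k. unfold qb. destruct (excluded_middle_informative (a k = 3)); simpl; auto.
    destruct (Ha k); auto; contradiction. }
  eapply is_lim_seq_ext. 2: apply Hl. intros n. simpl. rewrite <- comp_pre.
  generalize 0. induction n; intros x; simpl; auto. rewrite IHn, <- Hd. auto.
Qed.

Lemma prefb_app2 u w x : prefb u w = true -> prefb u (w ++ x) = true.
Proof. intros H. apply prefb_spec in H as [v ->]. rewrite <- app_assoc. apply prefb_app. Qed.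

Lemma prefb_len u w : prefb u w = true -> (length u <= length w)%nat.
Proof. intros H. apply prefb_spec in H as [v ->]. rewrite length_app. lia. Qed.

Section Konig.
Variable Good : list bool -> Prop.
Definition Bd w := forall u, prefb u w = true -> ~ Good u.
Definition Inf u := forall m, exists v, length v = m /\ Bd (u ++ v).

Lemma Bd_pref w x : Bd (w ++ x) -> Bd w.
Proof. intros H u Hu. apply H. apply prefb_app2; auto. Qed.

Lemma Inf_step u : Inf u -> Inf (u ++ [false]) \/ Inf (u ++ [true]).
Proof.
  intros H. destruct (classic (Inf (u ++ [false]))) as [?|H0]; auto.
  destruct (classic (Inf (u ++ [true]))) as [?|H1]; auto. exfalso.
  apply not_all_ex_not in H0 as [m0 H0]. apply not_all_ex_not in H1 as [m1 H1].
  destruct (H (S (max m0 m1))) as [v [Hv HB]].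
  destruct v as [|c v]. discriminate. simpl in Hv. injection Hv as Hv.
  destruct c.
  - apply H1. exists (firstn m1 v). split. rewrite firstn_length. lia.
    apply (Bd_pref _ (skipn m1 v)). rewrite <- !app_assoc. simpl. rewrite firstn_skipn. auto.
  - apply H0. exists (firstn m0 v). split. rewrite firstn_length. lia.
    apply (Bd_pref _ (skipn m0 v)). rewrite <- !app_assoc. simpl. rewrite firstn_skipn. auto.
Qed.

Definition nxt u := negb (qb (Inf (u ++ [false]))).
Fixpoint kpath n := match n with O => [] | S n => kpath n ++ [nxt (kpath n)] end.

Lemma kpath_Inf : Inf [] -> forall n, Inf (kpath n).
Proof.
  intros H0 n. induction n; simpl; auto. unfold nxt.
  destruct (qb (Inf (kpath n ++ [false]))) eqn:E; simpl.
  - apply qb_true in E. auto.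
  - destruct (Inf_step _ IHn); auto. rewrite qb_intro in E; auto. discriminate.
Qed.

Lemma konig : (forall p, exists n, Good (wpre p n)) ->
  exists N, forall w, length w = N -> exists u, prefb u w = true /\ Good u.
Proof.
  intros H. apply NNPP. intros Hn.
  assert (HI : Inf []).
  { intros m. apply NNPP. intros Hm. apply Hn. exists m. intros w Hw. apply NNPP. intros Hw'.
    apply Hm. exists w. split; auto. intros u Hu HG. apply Hw'. eauto. }
  set (p := fun k => nxt (kpath k)).
  assert (Hp : forall n, wpre p n = kpath n). { induction n; simpl; auto. rewrite IHn; auto. }
  destruct (H p) as [n Hg]. rewrite Hp in Hg.
  destruct (kpath_Inf HI n 0%nat) as [v [Hv HB]]. destruct v; try discriminate.
  rewrite app_nil_r in HB. apply (HB (kpath n)); auto. rewrite <- (app_nil_r (kpath n)) at 2. apply prefb_app.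
Qed.
End Konig.

Lemma finite_K (Q : nat -> list bool -> Prop) (l : list (list bool)) :
  (forall w, In w l -> exists u, prefb u w = true /\ exists k, Q k u) ->
  exists K, forall w, In w l -> exists u, prefb u w = true /\ exists k, (k <= K)%nat /\ Q k u.
Proof.
  induction l; intros H. exists 0%nat. intros w [].
  destruct IHl as [K HK]. intros; apply H; simpl; auto.
  destruct (H a (or_introl eq_refl)) as [u [Hu [k Hk]]].
  exists (max K k). intros w [<-|Hw].
  - exists u. split; auto. exists k. split; auto. lia.
  - destruct (HK w Hw) as [u' [Hu' [k' [Hk' Q']]]]. exists u'. split; auto. exists k'. split; auto. lia.
Qed.

End S6.

Lemma diam_pair (U : R -> Prop) x y : U x -> U y -> Rbar_le (Finite (Rabs (x - y))) (diam U).
Proof. intros. unfold diam. destruct (Lub_Rbar_correct (fun r => exists x y, U x /\ U y /\ r = Rabs (x - y))) as [H1 _].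
  apply H1. exists x, y. auto. Qed.

Lemma diam_fin (U : R -> Prop) z d0 : U z -> Rbar_le (diam U) (Finite d0) ->
  exists d, diam U = Finite d /\ 0 <= d <= d0 /\ forall y1 y2, U y1 -> U y2 -> Rabs (y1 - y2) <= d.
Proof.
  intros Hz Hd. pose proof (diam_pair U z z Hz Hz).
  destruct (diam U) eqn:E; simpl in *; try contradiction.
  exists r. split; auto. rewrite Rminus_diag, Rabs_R0 in H. split. lra.
  intros. pose proof (diam_pair U y1 y2 H0 H1). rewrite E in H2. auto.
Qed.

Lemma diam_pow_nonneg s U : 0 <= diam_pow s U.
Proof. unfold diam_pow. destruct (diam U); try lra. destruct (Rlt_dec 0 r). left; apply Rpower_pos. lra. Qed.

Lemma diam_pow_fin s U d : diam U = Finite d -> 0 < d -> diam_pow s U = Rpower d s.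
Proof. intros E H. unfold diam_pow. rewrite E. destruct (Rlt_dec 0 d); auto. lra. Qed.

Lemma diam_le s (U : R -> Prop) L : 0 <= s -> 0 < L -> (forall y1 y2, U y1 -> U y2 -> Rabs (y1 - y2) <= L) ->
  Rbar_le (diam U) (Finite L) /\ diam_pow s U <= Rpower L s.
Proof.
  intros Hs HL H.
  assert (Hd : Rbar_le (diam U) (Finite L)).
  { unfold diam. destruct (Lub_Rbar_correct (fun r => exists x y, U x /\ U y /\ r = Rabs (x - y))) as [_ H2].
    apply H2. intros r [x [y [Hx [Hy ->]]]]. simpl. auto. }
  split; auto. unfold diam_pow. destruct (diam U) eqn:E; simpl in Hd; try contradiction.
  destruct (Rlt_dec 0 r). apply Rpower_le_base; auto. left; apply Rpower_pos.
  left; apply Rpower_pos.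
Qed.

Definition cl (y : R) := Rmax 0 (Rmin 1 y).

Lemma cl_id y : 0 <= y <= 1 -> cl y = y.
Proof. intros. unfold cl. rewrite Rmin_right by lra. rewrite Rmax_right by lra. auto. Qed.

Lemma cl_01 y : 0 <= cl y <= 1.
Proof. unfold cl. unfold Rmax, Rmin. repeat destruct Rle_dec; lra. Qed.

Lemma cl_lip y c : 0 <= c <= 1 -> Rabs (cl y - c) <= Rabs (y - c).
Proof. intros. unfold cl, Rmax, Rmin. repeat destruct Rle_dec; unfold Rabs; repeat destruct Rcase_abs; lra. Qed.

Lemma cont_cl h c : cont_on01 h -> 0 <= c <= 1 -> continuity_pt (fun y => h (cl y)) c.
Proof.
  intros Hh Hc. apply continuity_pt_filterlim. rewrite (cl_id c Hc).
  eapply filterlim_comp. 2: apply (Hh c Hc).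
  intros P [eps HP]. exists eps. intros y Hy.
  apply HP. 2: apply cl_01.
  unfold ball in *; simpl in *; unfold AbsRing_ball, abs, minus, plus, opp in *; simpl in *.
  pose proof (cl_lip y c Hc). unfold Rminus in H. lra.
Qed.

Lemma ext_vals h : cont_on01 h -> (forall x, 0 <= x <= 1 -> 0 < h x) ->
  exists m M, 0 < m /\ forall x, 0 <= x <= 1 -> m <= h x <= M.
Proof.
  intros Hh Hp.
  destruct (continuity_ab_maj (fun y => h (cl y)) 0 1 ltac:(lra) (fun c Hc => cont_cl h c Hh Hc)) as [Mx [HM HMx]].
  destruct (continuity_ab_min (fun y => h (cl y)) 0 1 ltac:(lra) (fun c Hc => cont_cl h c Hh Hc)) as [mx [Hm Hmx]].
  exists (h mx), (h Mx). split. apply Hp; auto.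
  intros x Hx. specialize (HM x Hx). specialize (Hm x Hx). simpl in *. rewrite !cl_id in * by auto. lra.
Qed.

Lemma sumf_nonneg (a : nat -> R) N : (forall k, 0 <= a k) -> 0 <= sum_f_R0 a N.
Proof. intros. induction N; simpl; auto. pose proof (H (S N)). lra. Qed.

Lemma sum_nth {A} (l : list A) (F : A -> R) : (forall x, 0 <= F x) ->
  forall (G : nat -> R), (forall j, G j <= match nth_error l j with Some w => F w | None => 0 end) ->
  forall N, sum_f_R0 G N <= lsum F l.
Proof.
  intros HF. induction l as [|x l IH]; intros G HG N.
  - simpl. apply Rle_trans with (sum_f_R0 (fun _ => 0) N). apply sum_Rle. intros. specialize (HG n).
    destruct n; simpl in HG; auto. rewrite sum_cte. lra.
  - simpl. destruct N. simpl. specialize (HG 0%nat). simpl in HG.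
    pose proof (lsum_nonneg F l (fun x _ => HF x)). lra.
    rewrite decomp_sum by lia. simpl pred. specialize (IH (fun i => G (S i)) (fun j => HG (S j)) N).
    specialize (HG 0%nat). simpl in HG. lra.
Qed.

Lemma upper_null s h k : 0 < s -> 0 <= k < 1 -> (forall y, 0 <= y <= 1 -> Msum s h y <= k * h y) ->
  (exists m M, 0 < m /\ forall x, 0 <= x <= 1 -> m <= h x <= M) -> hausdorff_null s E_set.
Proof.
  intros Hs Hk Hsub [m [M [Hm HmM]]] delta eps Hdel Heps.
  set (Ds := Rpower DD s). assert (HDs : 0 < Ds) by apply Rpower_pos.
  assert (HM : 0 < M) by (destruct (HmM 0 ltac:(lra)); lra).
  destruct (small_exists delta Hdel) as [N1 HN1].
  destruct (pow_lt_1_zero k ltac:(rewrite Rabs_right; lra) (eps * m / (M * Ds))) as [N2 HN2].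
  { apply Rdiv_lt_0_compat; apply Rmult_lt_0_compat; auto. }
  set (n := max N1 N2).
  assert (HPn : P s n <= eps / Ds).
  { eapply Rle_trans. apply (P_upper s h k ltac:(lra) Hsub m (fun x Hx => proj1 (HmM x Hx)) Hm).
    specialize (HN2 n ltac:(lia)). rewrite Rabs_right in HN2 by (apply Rle_ge, pow_le; lra).
    destruct (HmM 0 ltac:(lra)).
    apply (Rmult_le_reg_r (m * Ds)). nra.
    replace (k ^ n * h 0 / m * (m * Ds)) with (k ^ n * h 0 * Ds) by (field; lra).
    replace (eps / Ds * (m * Ds)) with (eps * m) by (field; lra).
    apply (Rmult_lt_compat_r (M * Ds)) in HN2; [|nra].
    replace (eps * m / (M * Ds) * (M * Ds)) with (eps * m) in HN2 by (field; lra).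
    assert (0 <= k ^ n) by (apply pow_le; lra).
    assert (k ^ n * h 0 * Ds <= k ^ n * M * Ds). { apply Rmult_le_compat_r; [lra|]. apply Rmult_le_compat_l; lra. }
    nra. }
  exists (fun j y => exists w, nth_error (words n) j = Some w /\ Tw w 0 <= y <= Tw w 1).
  split; [|split].
  - intros y Hy. destruct (path_of_E y Hy) as [p Hp].
    pose proof (lim_in_cyl p y Hp n).
    pose proof (in_words (wpre p n)). rewrite pre_length in H0.
    destruct (In_nth_error _ _ H0) as [j Hj]. exists j, (wpre p n). auto.
  - intros j. destruct (nth_error (words n) j) as [w|] eqn:E.
    + apply Rbar_le_trans with (Finite (len w)).
      apply (diam_le s _ (len w) ltac:(lra) (len_pos w)).
      intros y1 y2 [w1 [E1 H1]] [w2 [E2 H2]]. injection E1 as <-. injection E2 as <-.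
      unfold len. apply Rabs_le. lra.
      simpl. pose proof (len_small w). rewrite (words_length n w) in H by (eapply nth_error_In; eauto).
      specialize (HN1 n ltac:(lia)). lra.
    + apply (diam_le s _ delta ltac:(lra) Hdel). intros y1 y2 [w1 [E1 _]]. discriminate.
  - intros K. rewrite sum_n_Reals.
    apply Rle_trans with (lsum (fun w => Rpower (len w) s) (words n)).
    + apply sum_nth. intros; left; apply Rpower_pos.
      intros j. destruct (nth_error (words n) j) as [w|] eqn:E.
      * apply (diam_le s _ (len w) ltac:(lra) (len_pos w)).
        intros y1 y2 [w1 [E1 H1]] [w2 [E2 H2]]. injection E1 as <-. injection E2 as <-.
        unfold len. apply Rabs_le. lra.
      * unfold diam_pow. assert (diam (fun y => exists w, (None : option (list bool)) = Some w /\ Tw w 0 <= y <= Tw w 1) = m_infty).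
        { unfold diam. apply is_lub_Rbar_unique. split.
          - intros r [x [y [[w1 [E1 _]] _]]]. discriminate.
          - intros b _. destruct b; simpl; auto. }
        rewrite H. lra.
    + apply Rle_trans with (lsum (fun w => Ds * Rpower (dd w 0) s) (words n)).
      * apply lsum_le. intros w _. unfold Ds. rewrite Rpower_mult_distr by (try apply DD_pos; apply dd_pos; lra).
        apply Rpower_le_base. lra. apply len_pos. apply len_le.
      * rewrite lsum_scal. fold (P s n). apply (Rmult_le_compat_l Ds) in HPn; [|lra].
        replace (Ds * (eps / Ds)) with eps in HPn by (field; lra). auto.
Qed.

Lemma lsum_filter_if {A} (F : A -> R) f l : lsum F (filter f l) = lsum (fun x => if f x then F x else 0) l.
Proof. induction l; simpl; auto. destruct (f a); simpl; rewrite IHl; ring. Qed.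

Lemma lsum_sumf {A} (G : nat -> A -> R) l K :
  lsum (fun x => sum_f_R0 (fun k => G k x) K) l = sum_f_R0 (fun k => lsum (G k) l) K.
Proof. induction K; simpl; auto. rewrite lsum_plus, IHK. auto. Qed.

Lemma sumf_ge (a : nat -> R) K k : (forall j, 0 <= a j) -> (k <= K)%nat -> a k <= sum_f_R0 a K.
Proof. intros H. induction K; intros Hk. assert (k = 0%nat) by lia. subst; simpl; lra.
  destruct (Nat.eq_dec k (S K)). subst. simpl. pose proof (sumf_nonneg a K H). lra.
  simpl. pose proof (H (S K)). specialize (IHK ltac:(lia)). lra. Qed.

Lemma filter_union (Q : nat -> list bool -> Prop) (F : list bool -> R) l K : (forall x, 0 <= F x) ->
  lsum F (filter (fun u => qb (exists k, (k <= K)%nat /\ Q k u)) l) <=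
  sum_f_R0 (fun k => lsum F (filter (fun u => qb (Q k u)) l)) K.
Proof.
  intros HF. rewrite lsum_filter_if.
  rewrite (sum_eq _ (fun k => lsum (fun x => if qb (Q k x) then F x else 0) l)).
  2: intros; apply lsum_filter_if.
  rewrite <- lsum_sumf. apply lsum_le. intros x _.
  destruct (qb (exists k, (k <= K)%nat /\ Q k x)) eqn:E.
  - apply qb_true in E as [k [Hk HQ]].
    eapply Rle_trans. 2: apply (sumf_ge (fun k => if qb (Q k x) then F x else 0) K k).
    rewrite qb_intro; auto. lra. intros j. destruct (qb (Q j x)); auto; lra. auto.
  - apply sumf_nonneg. intros j. destruct (qb (Q j x)); auto; lra.
Qed.

Lemma geom_sum K : sum_f_R0 (fun k => (/2) ^ (S k)) K <= 1.
Proof.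
  assert (forall K, sum_f_R0 (fun k => (/2) ^ (S k)) K = 1 - (/2) ^ (S K)).
  { induction K0. simpl; field. rewrite tech5, IHK0. simpl; field. }
  rewrite H. pose proof (pow_lt (/2) (S K) ltac:(lra)). lra.
Qed.

Lemma pow_half_le1 n : (/2) ^ n <= 1.
Proof. induction n; simpl. lra. pose proof (pow_lt (/2) n ltac:(lra)). lra. Qed.

Lemma first_drop (F : nat -> R) r n0 : r < F 0%nat -> F n0 <= r -> exists n, F (S n) <= r /\ r < F n.
Proof.
  revert F; induction n0; intros F H0 H1. lra.
  destruct (Rle_lt_dec (F n0) r). apply IHn0; auto.
  exists n0. auto.
Qed.

Lemma lower_notnull s h : 0 < s -> (forall y, 0 <= y <= 1 -> h y <= Msum s h y) ->
  (exists m M, 0 < m /\ forall x, 0 <= x <= 1 -> m <= h x <= M) -> ~ hausdorff_null s E_set.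
Proof.
  intros Hs Hsup [m [M [Hm HmM]]] Hnull.
  assert (HM : 0 < M) by (destruct (HmM 0 ltac:(lra)); lra).
  set (c0 := h 0 / M).
  assert (Hc0 : 0 < c0) by (unfold c0; destruct (HmM 0 ltac:(lra)); apply Rdiv_lt_0_compat; lra).
  assert (HP : forall n, c0 <= P s n).
  { intros. apply (P_lower s h M Hsup). intros y Hy. destruct (HmM y Hy); lra. }
  set (Ds := Rpower DD s). assert (HDs : 0 < Ds) by apply Rpower_pos.
  pose proof DD_pos as HDD.
  set (A := Ds * Ds * (16 * DD * Ds)).
  assert (HA : 0 < A) by (unfold A; repeat apply Rmult_lt_0_compat; lra).
  set (tau := Rmin (c0 / (4 * A)) (Rpower (/2) s)).
  assert (Htau : 0 < tau) by (unfold tau; apply Rmin_pos; [apply Rdiv_lt_0_compat; lra | apply Rpower_pos]).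
  destruct (Hnull (/2) (c0 / (4 * A)) ltac:(lra) ltac:(apply Rdiv_lt_0_compat; lra)) as [U [Hcov [Hdiam Hsum]]].
  set (eta := fun k : nat => Rpower (tau * (/2) ^ (S k)) (/ s)).
  assert (Heta_pos : forall k, 0 < eta k) by (intros; apply Rpower_pos).
  assert (Heta_s : forall k, Rpower (eta k) s = tau * (/2) ^ (S k)).
  { intros k. unfold eta. rewrite Rpower_mult. rewrite Rinv_l by lra. apply Rpower_1.
    apply Rmult_lt_0_compat; auto. apply pow_lt; lra. }
  assert (Heta_le : forall k, eta k <= /2).
  { intros k. unfold eta. replace (/2) with (Rpower (Rpower (/2) s) (/ s)) at 2.
    apply Rpower_le_base. left; apply Rinv_0_lt_compat; auto.
    apply Rmult_lt_0_compat; auto. apply pow_lt; lra.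
    assert (tau <= Rpower (/2) s) by apply Rmin_r.
    assert ((/2) ^ (S k) <= 1) by (apply pow_half_le1).
    assert (0 < (/2) ^ (S k)) by (apply pow_lt; lra). nra.
    rewrite Rpower_mult, Rinv_r by lra. apply Rpower_1. lra. }
  set (dr := fun k => match diam (U k) with Finite d => d | _ => 0 end).
  set (r := fun k => Rmax (dr k) (eta k)).
  assert (Hr_pos : forall k, 0 < r k) by (intros; unfold r; eapply Rlt_le_trans; [apply Heta_pos| apply Rmax_r]).
  assert (Hr_diam : forall k y1 y2, U k y1 -> U k y2 -> Rabs (y1 - y2) <= r k).
  { intros k y1 y2 H1 H2. destruct (diam_fin (U k) y1 (/2) H1 (Hdiam k)) as [d [Ed [Hd Hdd]]].
    unfold r, dr. rewrite Ed. eapply Rle_trans. apply Hdd; auto. apply Rmax_l. }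
  assert (Hr_le : forall k, r k <= /2).
  { intros k. unfold r, dr. apply Rmax_lub; auto. pose proof (Hdiam k).
    destruct (diam (U k)); simpl in *; auto; lra. }
  assert (Hr_pow : forall k, Rpower (r k) s <= diam_pow s (U k) + tau * (/2) ^ (S k)).
  { intros k. unfold r. destruct (Rle_lt_dec (dr k) (eta k)).
    - rewrite Rmax_right by auto. rewrite Heta_s. pose proof (diam_pow_nonneg s (U k)). lra.
    - rewrite Rmax_left by lra. unfold dr in *. destruct (diam (U k)) as [d0| |] eqn:E.
      + rewrite (diam_pow_fin s (U k) d0 E). assert (0 < tau * (/2) ^ (S k)) by (apply Rmult_lt_0_compat; auto; apply pow_lt; lra). lra.
        pose proof (Heta_pos k). lra.
      + pose proof (Heta_pos k). lra.
      + pose proof (Heta_pos k). lra. }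
  set (Q := fun k u => Qset (r k) (U k) u).
  assert (HG : forall p, exists n, (fun u => exists k, Q k u) (wpre p n)).
  { intros p. destruct (E_of_path p) as [y [Hy Hin]]. destruct (Hcov y Hy) as [k Hk].
    destruct (small_exists (r k) (Hr_pos k)) as [N0 HN0].
    destruct (first_drop (fun n => len (wpre p n)) (r k) N0) as [n [H1 H2]].
    simpl. rewrite len_nil. pose proof (Hr_le k). lra.
    pose proof (len_small (wpre p N0)). rewrite pre_length in H. specialize (HN0 N0 (le_n _)). lra.
    exists (S n), k. exists (wpre p n), (p n). split; auto. split; auto. split; auto.
    exists y. split; auto. }
  destruct (konig _ HG) as [N HN].
  destruct (finite_K Q (words N)) as [K HK].
  { intros w Hw. apply HN. apply words_length; auto. }
  set (C := filter (fun u => qb (exists k, (k <= K)%nat /\ Q k u)) (AllW N)).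
  assert (Hcut := cut_bound s c0 C N ltac:(lra) Hc0 HP).
  assert (H1 : c0 <= Ds * Ds * lsum (fun u => Rpower (dd u 0) s) C).
  { apply Hcut.
    - intros u Hu. apply filter_In in Hu as [Hu _]. apply AllW_len; auto.
    - intros w Hw. destruct (HK w Hw) as [u [Hu Hk]]. exists u. split; auto.
      apply filter_In. split. apply in_AllW. apply prefb_len in Hu. rewrite (words_length N w Hw) in Hu. auto.
      apply qb_intro. auto. }
  assert (H2 : lsum (fun u => Rpower (dd u 0) s) C <= sum_f_R0 (fun k => 16 * DD * Ds * Rpower (r k) s) K).
  { eapply Rle_trans. apply filter_union. intros; left; apply Rpower_pos.
    apply sum_Rle. intros k _.
    destruct (classic (exists z, U k z)) as [[z Hz]|Hne].
    - eapply Rle_trans. apply (Q_count (r k) (U k) (AllW N) z s (Hr_pos k) ltac:(lra) (AllW_nodup N) Hz (Hr_diam k)).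
      unfold Ds. rewrite <- Rpower_mult_distr by auto. right; ring.
    - apply Rle_trans with (lsum (fun _ => 0) (filter (fun u => qb (Q k u)) (AllW N))).
      apply lsum_le. intros u Hu. apply filter_In in Hu as [_ Hu]. apply qb_true in Hu.
      destruct Hu as [? [? [? [? [? [y [Hy _]]]]]]]. exfalso; eauto.
      rewrite lsum_zero. left; repeat apply Rmult_lt_0_compat; try apply Rpower_pos; lra. }
  assert (H3 : sum_f_R0 (fun k => Rpower (r k) s) K <= c0 / (4 * A) + tau).
  { eapply Rle_trans. apply sum_Rle. intros k _. apply Hr_pow.
    rewrite sum_plus. specialize (Hsum K). rewrite sum_n_Reals in Hsum.
    assert (sum_f_R0 (fun k => tau * (/2) ^ (S k)) K <= tau).
    { rewrite (sum_eq _ (fun k => (/2)^(S k) * tau)) by (intros; ring). rewrite <- scal_sum.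
      rewrite <- (Rmult_1_r tau) at 2. apply Rmult_le_compat_l. lra. apply geom_sum. }
    lra. }
  assert (H4 : sum_f_R0 (fun k => 16 * DD * Ds * Rpower (r k) s) K = 16 * DD * Ds * sum_f_R0 (fun k => Rpower (r k) s) K).
  { rewrite scal_sum. apply sum_eq. intros; ring. }
  assert (Htau2 : tau <= c0 / (4 * A)) by apply Rmin_l.
  assert (c0 <= A * (c0 / (4 * A) + c0 / (4 * A))).
  { assert (H5 : lsum (fun u => Rpower (dd u 0) s) C <= 16 * DD * Ds * (c0 / (4 * A) + c0 / (4 * A))).
    { rewrite H4 in H2. eapply Rle_trans. apply H2.
      apply Rmult_le_compat_l. left; repeat apply Rmult_lt_0_compat; lra. lra. }
    eapply Rle_trans. apply H1.
    apply Rle_trans with (Ds * Ds * (16 * DD * Ds * (c0 / (4 * A) + c0 / (4 * A)))).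
    apply Rmult_le_compat_l. nra. auto. right. set (X := c0 / (4 * A) + c0 / (4 * A)). unfold A. ring. }
  replace (A * (c0 / (4 * A) + c0 / (4 * A))) with (c0 / 2) in H by (field; lra). lra.
Qed.

Lemma ln_Tp b y : 0 <= y <= 1 -> - ln 4 <= ln (Tp b y) <= - ln 2.
Proof.
  intros Hy. pose proof (Tp_bounds b y Hy). pose proof (Tp_pos b y ltac:(lra)).
  rewrite <- !ln_Rinv by lra. split; apply ln_le; lra.
Qed.

Lemma ln2_pos : 0 < ln 2.
Proof. rewrite <- ln_1. apply ln_increasing; lra. Qed.

Lemma ln4_pos : 0 < ln 4.
Proof. rewrite <- ln_1. apply ln_increasing; lra. Qed.

Lemma Msum_lower s t0 beta h : 0 < beta -> s <= t0 + beta / ln 4 -> (forall y, 0 <= y <= 1 -> 0 < h y) ->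
  forall y, 0 <= y <= 1 -> exp (- beta) * Msum t0 h y <= Msum s h y.
Proof.
  intros Hb Hs Hh y Hy. unfold Msum.
  assert (K : forall b, exp (- beta) * Rpower (Tp b y) t0 <= Rpower (Tp b y) s).
  { intros b. unfold Rpower. rewrite <- exp_plus. apply exp_mono.
    pose proof (ln_Tp b y Hy). pose proof ln4_pos. pose proof ln2_pos.
    set (A := ln (Tp b y)) in *.
    assert ((s - t0) * ln 4 <= beta).
    { apply (Rmult_le_compat_r (ln 4)) in Hs; [|lra]. field_simplify in Hs; lra. }
    destruct (Rle_lt_dec s t0). nra. nra. }
  pose proof (Hh _ (T_01 false y Hy)). pose proof (Hh _ (T_01 true y Hy)).
  pose proof (K false). pose proof (K true). nra.
Qed.

Lemma Msum_upper s t1 alpha h : 0 < alpha -> t1 - alpha / (2 * ln 4) <= s -> s <= t1 -> (forall y, 0 <= y <= 1 -> 0 < h y) ->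
  forall y, 0 <= y <= 1 -> Msum s h y <= exp (alpha / 2) * Msum t1 h y.
Proof.
  intros Ha Hs Hs1 Hh y Hy. unfold Msum.
  assert (K : forall b, Rpower (Tp b y) s <= exp (alpha / 2) * Rpower (Tp b y) t1).
  { intros b. unfold Rpower. rewrite <- exp_plus. apply exp_mono.
    pose proof (ln_Tp b y Hy). pose proof ln4_pos. pose proof ln2_pos.
    set (A := ln (Tp b y)) in *.
    assert ((t1 - s) * ln 4 <= alpha / 2).
    { assert (t1 - s <= alpha / (2 * ln 4)) by lra.
      apply (Rmult_le_compat_r (ln 4)) in H2; [|lra]. field_simplify in H2; lra. }
    nra. }
  pose proof (Hh _ (T_01 false y Hy)). pose proof (Hh _ (T_01 true y Hy)).
  pose proof (K false). pose proof (K true). nra.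
Qed.

Theorem mainTheorem15 (t0 t1 : R) (f g : R -> R) (alpha beta : R) :
  0 < t0 -> t0 < t1 ->
  cont_on01 f -> cont_on01 g ->
  (forall x, 0 <= x <= 1 -> 0 < f x) ->
  (forall x, 0 <= x <= 1 -> 0 < g x) ->
  0 < alpha -> 0 < beta ->
  (forall x, 0 <= x <= 1 -> exp beta <= Mop t0 g x / g x) ->
  (forall x, 0 <= x <= 1 -> Mop t1 f x / f x <= exp (- alpha)) ->
  Rbar_lt (Finite t0) (dimH E_set) /\ Rbar_lt (dimH E_set) (Finite t1).
Proof.
  intros Ht0 Ht01 Hcf Hcg Hfp Hgp Ha Hb Hg Hf.
  pose proof ln4_pos as Hl4.
  assert (Hgm : forall y, 0 <= y <= 1 -> exp beta * g y <= Msum t0 g y).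
  { intros y Hy. specialize (Hg y Hy). specialize (Hgp y Hy). rewrite Mop_eq in Hg by auto.
    unfold Msum. apply (Rmult_le_compat_r (g y)) in Hg; [|lra].
    unfold Rdiv in Hg. rewrite Rmult_assoc, Rinv_l, Rmult_1_r in Hg by lra. auto. }
  assert (Hfm : forall y, 0 <= y <= 1 -> Msum t1 f y <= exp (- alpha) * f y).
  { intros y Hy. specialize (Hf y Hy). specialize (Hfp y Hy). rewrite Mop_eq in Hf by auto.
    unfold Msum. apply (Rmult_le_compat_r (f y)) in Hf; [|lra].
    unfold Rdiv in Hf. rewrite Rmult_assoc, Rinv_l, Rmult_1_r in Hf by lra. auto. }
  unfold dimH. destruct (Glb_Rbar_correct (fun s => 0 < s /\ hausdorff_null s E_set)) as [Hlb Hglb].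
  split.
  - set (t' := t0 + beta / ln 4).
    assert (Ht' : t0 < t') by (unfold t'; assert (0 < beta / ln 4) by (apply Rdiv_lt_0_compat; lra); lra).
    assert (Rbar_le (Finite t') (Glb_Rbar (fun s => 0 < s /\ hausdorff_null s E_set))).
    { apply Hglb. intros s [Hs Hn]. simpl. destruct (Rle_lt_dec s t') as [Hst|Hst]; [|lra].
      exfalso. apply (lower_notnull s g Hs); auto. 2: apply ext_vals; auto.
      intros y Hy. pose proof (Msum_lower s t0 beta g Hb Hst Hgp y Hy). pose proof (Hgm y Hy).
      pose proof (Hgp y Hy). pose proof (exp_pos (-beta)).
      assert (exp (- beta) * (exp beta * g y) = g y) by (rewrite <- Rmult_assoc, <- exp_plus, Rplus_opp_l, exp_0; ring).
      assert (exp (- beta) * (exp beta * g y) <= exp (- beta) * Msum t0 g y) by (apply Rmult_le_compat_l; lra).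
      lra. }
    destruct (Glb_Rbar _); simpl in *; auto. lra.
  - set (eta := Rmin (alpha / (2 * ln 4)) (t1 / 2)).
    assert (Heta : 0 < eta) by (unfold eta; apply Rmin_pos; [apply Rdiv_lt_0_compat; lra|lra]).
    set (s := t1 - eta).
    assert (Hs : 0 < s /\ hausdorff_null s E_set).
    { split. unfold s. assert (eta <= t1 / 2) by apply Rmin_r. lra.
      apply (upper_null s f (exp (- alpha / 2))).
      unfold s. assert (eta <= t1 / 2) by apply Rmin_r. lra.
      split. left; apply exp_pos. rewrite <- exp_0. apply exp_increasing. lra.
      intros y Hy. eapply Rle_trans. apply (Msum_upper s t1 alpha f); auto.
      unfold s. assert (eta <= alpha / (2 * ln 4)) by apply Rmin_l. lra. unfold s; lra.
      pose proof (Hfm y Hy). pose proof (exp_pos (alpha / 2)).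
      apply Rle_trans with (exp (alpha / 2) * (exp (- alpha) * f y)). apply Rmult_le_compat_l; lra.
      right. rewrite <- Rmult_assoc, <- exp_plus. f_equal. f_equal. lra.
      apply ext_vals; auto. }
    pose proof (Hlb s Hs). destruct (Glb_Rbar _); simpl in *; auto. unfold s in *. lra.
Qed.
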